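(* Under the hypotheses and notation of the linearised solver without regularisation (with $L\ge L_\zeta/2$, $u^n$ the solution of the nonlinear discrete equation and $(u^{n,i})_{i\ge0}$ the iterates), let $e^{n,i}:=u^n-u^{n,i}$. Then for every $i\ge1$, $$2\|\Pi_{\mathcal D}e^{n,i}\|_{*,\mathcal D}^2+\delta t\,L\,\|\Pi_{\mathcal D}e^{n,i}\|^2\le \delta t\,L\,\|\Pi_{\mathcal D}e^{n,i-1}\|^2,$$ and consequently $2\sum_{i=1}^\infty\|\Pi_{\mathcal D}e^{n,i}\|_{*,\mathcal D}^2\le\delta t\,L\,\|\Pi_{\mathcal D}e^{n,0}\|^2$.
   Context: Setting: $\Theta\subset\mathbb{R}^d$ open bounded; gradient discretisation with piecewise constant reconstruction $(X_{\mathcal D},\Pi_{\mathcal D},\nabla_{\mathcal D})$: $X_{\mathcal D}$ finite-dimensional with basis indexed by a finite set $B$, $\Pi_{\mathcal D}v=\sum_{j\in B}v_j\mathbf 1_{\Theta_j}$ for disjoint measurable $\Theta_j\subset\Theta$, $\nabla_{\mathcal D}:X_{\mathcal D}\to L^2(\Theta)^d$ linear with $\|\nabla_{\mathcal D}\cdot\|$ a norm. For $g$ with $g(0)=0$, $g(v):=(g(v_j))_j$. $\zeta$ non-decreasing Lipschitz, $\zeta(0)=0$, $0\le\zeta'\le L_\zeta$ a.e.; $\delta t>0$; $r\in L^2(\Theta)$ fixed. $u^n\in X_{\mathcal D}$ satisfies $\langle\Pi_{\mathcal D}u^n,\Pi_{\mathcal D}\varphi\rangle+\delta t\langle\nabla_{\mathcal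 D}\zeta(u^n),\nabla_{\mathcal D}\varphi\rangle=\langle r,\Pi_{\mathcal D}\varphi\rangle$ for all $\varphi\in X_{\mathcal D}$; $u^{n,0}\in X_{\mathcal D}$ arbitrary and for $i\ge1$, $\langle\Pi_{\mathcal D}u^{n,i},\Pi_{\mathcal D}\varphi\rangle+\delta t L\langle\nabla_{\mathcal D}u^{n,i},\nabla_{\mathcal D}\varphi\rangle=\delta t\langle L\nabla_{\mathcal D}u^{n,i-1}-\nabla_{\mathcal D}\zeta(u^{n,i-1}),\nabla_{\mathcal D}\varphi\rangle+\langle r,\Pi_{\mathcal D}\varphi\rangle$ for all $\varphi$. $\|\cdot\|$ is the $L^2(\Theta)$ norm and $\|v\|_{*,\mathcal D}:=\sup\{\int_\Theta v\,\Pi_{\mathcal D}w: w\in X_{\mathcal D},\|\nabla_{\mathcal D}w\|=1\}$. *)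

(* Defs.v *)
From mathcomp Require Import all_boot all_order all_algebra.
From mathcomp Require Import all_classical all_reals all_analysis.
Set Implicit Arguments. Unset Strict Implicit. Unset Printing Implicit Defensive.
Import Order.TTheory GRing.Theory Num.Theory.
Import numFieldNormedType.Exports.
Local Open Scope classical_set_scope.
Local Open Scope ring_scope.

Section GDDefs.
Context {R : realType} {dsp : measure_display} {T : measurableType dsp}
  (mu : {measure set T -> \bar R}) (Theta : set T).

Definition L2inner (f g : T -> R) : R :=
  Rintegral mu Theta (fun x => f x * g x).
Definition L2norm (f : T -> R) : R := Num.sqrt (L2inner f f).

Definition L2vinner (d : nat) (F G : T -> 'rV[R]_d) : R :=
  Rintegral mu Theta (fun x => \sum_(k < d) F x 0 k * G x 0 k).
Definition L2vnorm (d : nat) (F : T -> 'rV[R]_d) : R :=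
  Num.sqrt (L2vinner F F).

Definition isL2 (f : T -> R) : Prop :=
  measurable_fun Theta f /\
  (\int[mu]_(x in Theta) ((f x) ^+ 2)%:E < +oo)%E.
Definition isL2v (d : nat) (F : T -> 'rV[R]_d) : Prop :=
  forall k : 'I_d, isL2 (fun x => F x 0 k).

Definition PiD (B : finType) (Om : B -> set T) (v : B -> R) : T -> R :=
  fun x => \sum_(j : B) v j * \1_(Om j) x.

Definition compv (B : finType) (g : R -> R) (v : B -> R) : B -> R :=
  fun j => g (v j).

Definition dualnorm (B : finType) (d : nat) (Om : B -> set T)
  (grad : (B -> R) -> T -> 'rV[R]_d) (v : T -> R) : R :=
  sup [set y : R | exists w : B -> R,
         L2vnorm (grad w) = 1 /\ y = L2inner v (PiD Om w)].

End GDDefs.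

(* Main.v *)
Require Import Defs.
From mathcomp Require Import all_boot all_order all_algebra.
From mathcomp Require Import all_classical all_reals all_analysis.
From mathcomp Require Import ring lra measurable_realfun.
Set Implicit Arguments. Unset Strict Implicit.
Import Order.TTheory GRing.Theory Num.Theory.
Import numFieldNormedType.Exports.
Local Open Scope classical_set_scope.
Local Open Scope ring_scope.

Section Infra.
Context {R : realType} {dsp : measure_display} {T : measurableType dsp}
  (mu : {measure set T -> \bar R}) (Theta : set T).
Hypothesis mTh : measurable Theta.
Hypothesis finTh : (mu Theta < +oo)%E.

Lemma L2_int2 (f : T -> R) : isL2 mu Theta f ->
  mu.-integrable Theta (EFin \o (fun x => f x ^+ 2)).
Proof.
move=> [mf fi]; apply/integrableP; split.
  by apply/measurable_EFinP; exact: measurable_funX.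
by under eq_integral => x _ do rewrite /= ger0_norm ?sqr_ge0//.
Qed.

Lemma int2_L2 (f : T -> R) : measurable_fun Theta f ->
  mu.-integrable Theta (EFin \o (fun x => f x ^+ 2)) -> isL2 mu Theta f.
Proof.
move=> mf /integrableP[_ fi]; split => //; move: fi.
by under eq_integral => x _ do rewrite /= ger0_norm ?sqr_ge0//.
Qed.

Lemma L2_meas (f : T -> R) : isL2 mu Theta f -> measurable_fun Theta f.
Proof. by case. Qed.

Lemma L2_prod (f g : T -> R) : isL2 mu Theta f -> isL2 mu Theta g ->
  mu.-integrable Theta (EFin \o (fun x => f x * g x)).
Proof.
move=> hf hg.
have hs := integrableD mTh (L2_int2 hf) (L2_int2 hg).
apply: (le_integrable mTh _ _ hs).
  apply/measurable_EFinP; exact: measurable_funM (L2_meas hf) (L2_meas hg).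
move=> x _ /=; rewrite lee_fin.
rewrite [X in _ <= X]ger0_norm; last by rewrite addr_ge0 // sqr_ge0.
rewrite ler_norml; apply/andP; split; nra.
Qed.

Lemma cst_int (k : R) : mu.-integrable Theta (EFin \o cst k).
Proof.
apply/integrableP; split; first exact/measurable_EFinP.
rewrite (_ : (\int[mu]_(x in Theta) _ = `|k|%:E * mu Theta)%E).
  by rewrite lte_mul_pinfty.
by rewrite -integral_cst //; apply: eq_integral.
Qed.

Lemma bdd_L2 (f : T -> R) M : measurable_fun Theta f -> (forall x, `|f x| <= M) ->
  isL2 mu Theta f.
Proof.
move=> mf fM; apply: int2_L2 => //.
apply: (le_integrable mTh _ _ (cst_int (M ^+ 2))).
  by apply/measurable_EFinP; exact: measurable_funX.
move=> x _ /=; rewrite lee_fin !ger0_norm ?sqr_ge0 //.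
by have := fM x; rewrite ler_norml => /andP[h1 h2]; nra.
Qed.

End Infra.

Lemma pw_ineq (R : realType) (zeta : R -> R) (Lz L a u U : R) :
  {homo zeta : x y / x <= y} -> 0 <= Lz ->
  (forall x y, `|zeta x - zeta y| <= Lz * `|x - y|) -> Lz / 2 <= L ->
  a * (L * (u - U) - (zeta u - zeta U)) <= L / 2 * (a * a + (u - U) * (u - U)).
Proof.
move=> zm Lz0 zl hL.
have L0 : 0 <= L by lra.
have hl := zl u U.
set c := L * (u - U) - (zeta u - zeta U).
have hc : - (L * `|u - U|) <= c <= L * `|u - U|.
  have [uU|Uu] := leP U u.
    have z1 := zm _ _ uU.
    move: hl; rewrite !ger0_norm ?subr_ge0 // => hl.
    apply/andP; split; rewrite /c; nra.
  have z1 := zm _ _ (ltW Uu).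
  move: hl; rewrite !ler0_norm ?subr_le0 ?(ltW Uu) // => hl.
  apply/andP; split; rewrite /c; nra.
move: hc => /andP[c1 c2].
have nb0 : 0 <= `|u - U| by [].
have nbb : `|u - U| * `|u - U| = (u - U) * (u - U).
  by rewrite -expr2 real_normK ?num_real // expr2.
have [a0|a0] := leP 0 a.
  have h1 : a * c <= a * (L * `|u - U|) by apply: ler_wpM2l.
  have h2 : 0 <= L * ((a - `|u - U|) * (a - `|u - U|)).
    by apply: mulr_ge0 => //; rewrite -expr2 sqr_ge0.
  nra.
have h1 : a * c <= - a * (L * `|u - U|).
  have na : 0 <= - a by lra.
  have := ler_wpM2l na c1; nra.
have h2 : 0 <= L * ((a + `|u - U|) * (a + `|u - U|)).
  by apply: mulr_ge0 => //; rewrite -expr2 sqr_ge0.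
nra.
Qed.

Section Forms.
Context {R : realType} {dsp : measure_display} {T : measurableType dsp}
  (mu : {measure set T -> \bar R}) (Theta : set T) (d : nat)
  (B : finType) (Om : B -> set T) (grad : (B -> R) -> T -> 'rV[R]_d).
Hypothesis mTh : measurable Theta.
Hypothesis finTh : (mu Theta < +oo)%E.
Hypothesis mOm : forall j, measurable (Om j).
Hypothesis OmTh : forall j, Om j `<=` Theta.
Hypothesis Omdisj : forall j k, j != k -> Om j `&` Om k = set0.
Hypothesis gL2 : forall v, isL2v mu Theta (grad v).
Hypothesis glin : forall (a : R) (v w : B -> R),
      grad (fun j => a * v j + w j) = (fun x => a *: grad v x + grad w x).

Lemma int_scale (h : T -> R) (a : R) : mu.-integrable Theta (EFin \o h) ->
  mu.-integrable Theta (EFin \o (fun x => a * h x)).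
Proof.
move=> hi; apply: (eq_integrable mTh _ _ _ (integrableZl mTh a hi)).
by move=> x _ /=; rewrite EFinM.
Qed.

Lemma PiD_meas (v : B -> R) : measurable_fun Theta (PiD Om v).
Proof.
apply: (@measurable_sum _ _ R Theta B (index_enum B) (fun j x => v j * \1_(Om j) x)) => j.
by apply: measurable_funM => //; exact: measurable_indic.
Qed.

Lemma PiD_bdd (v : B -> R) x : `|PiD Om v x| <= \sum_j `|v j|.
Proof.
rewrite /PiD; apply: (le_trans (ler_norm_sum _ _ _)).
apply: ler_sum => j _; rewrite normrM indicE.
by case: (x \in Om j); rewrite ?normr1 ?normr0 ?mulr1 ?mulr0.
Qed.

Lemma PiD_L2 (v : B -> R) : isL2 mu Theta (PiD Om v).
Proof. exact: bdd_L2 (PiD_meas v) (PiD_bdd v). Qed.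

Lemma PiD_lin (a : R) (v w : B -> R) x :
  PiD Om (fun j => a * v j + w j) x = a * PiD Om v x + PiD Om w x.
Proof.
rewrite /PiD mulr_sumr -big_split /=; apply: eq_bigr => j _.
by rewrite mulrDl mulrA.
Qed.

Lemma PiD_in (v : B -> R) j x : Om j x -> PiD Om v x = v j.
Proof.
move=> hj; rewrite /PiD (bigD1 j) //= indicE mem_set // mulr1.
rewrite big1 ?addr0 // => k kj; rewrite indicE.
case: (boolP (x \in Om k)) => [/set_mem hk|]; last by rewrite mulr0.
have : (Om j `&` Om k) x by split.
by rewrite Omdisj // eq_sym.
Qed.

Lemma PiD_out (v : B -> R) x : (forall j, ~ Om j x) -> PiD Om v x = 0.
Proof.
move=> h; rewrite /PiD big1 // => j _; rewrite indicE.
by case: (boolP (x \in Om j)) => [/set_mem /h|]; rewrite ?mulr0.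
Qed.

Definition mform (v w : B -> R) := L2inner mu Theta (PiD Om v) (PiD Om w).
Definition aform v w := L2vinner mu Theta (grad v) (grad w).

Lemma mform_sym (v w : B -> R) : mform v w = mform w v.
Proof. by rewrite /mform /L2inner; congr Rintegral; apply: boolp.funext => x; rewrite mulrC. Qed.

Lemma aform_sym (v w : B -> R) : aform v w = aform w v.
Proof.
rewrite /aform /L2vinner; congr Rintegral; apply: boolp.funext => x.
by apply: eq_bigr => k _; rewrite mulrC.
Qed.

Lemma mform_lin (u : B -> R) (a : R) (v w : B -> R) :
  mform u (fun j => a * v j + w j) = a * mform u v + mform u w.
Proof.
rewrite /mform /L2inner.
have -> : (fun x => PiD Om u x * PiD Om (fun j => a * v j + w j) x) =
   (fun x => a * (PiD Om u x * PiD Om v x) + PiD Om u x * PiD Om w x).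
  by apply: boolp.funext => x; rewrite PiD_lin mulrDr mulrCA.
have i1 := L2_prod mTh (PiD_L2 u) (PiD_L2 v).
have i2 := L2_prod mTh (PiD_L2 u) (PiD_L2 w).
rewrite RintegralD //; last exact: int_scale.
by rewrite RintegralZl.
Qed.

Lemma vprod_int (F G : T -> 'rV[R]_d) : isL2v mu Theta F -> isL2v mu Theta G ->
  mu.-integrable Theta (EFin \o (fun x => \sum_(k < d) F x 0 k * G x 0 k)).
Proof.
move=> hF hG.
have := @integrable_sum _ _ _ mu _ mTh _ (index_enum 'I_d) xpredT
  (fun k x => (F x 0 k * G x 0 k)%:E) (fun k _ => L2_prod mTh (hF k) (hG k)).
apply: eq_integrable => // x _ /=; by rewrite sumEFin.
Qed.

Lemma aform_lin (u : B -> R) (a : R) (v w : B -> R) :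
  aform u (fun j => a * v j + w j) = a * aform u v + aform u w.
Proof.
rewrite /aform /L2vinner glin.
have -> : (fun x => \sum_(k < d) grad u x 0 k * (a *: grad v x + grad w x) 0 k) =
   (fun x => a * (\sum_(k < d) grad u x 0 k * grad v x 0 k) +
             \sum_(k < d) grad u x 0 k * grad w x 0 k).
  apply: boolp.funext => x; rewrite mulr_sumr -big_split /=.
  by apply: eq_bigr => k _; rewrite !mxE mulrDr mulrCA.
have i1 := vprod_int (gL2 u) (gL2 v).
have i2 := vprod_int (gL2 u) (gL2 w).
rewrite RintegralD //; last exact: int_scale.
by rewrite RintegralZl.
Qed.

Hypothesis ginj : forall v, L2vnorm mu Theta (grad v) = 0 -> v = (fun _ => 0).

Definition delta (k : B) : B -> R := fun j => (j == k)%:R.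

Lemma lin0 (F : (B -> R) -> R) :
  (forall (a : R) (v w : B -> R), F (fun j => a * v j + w j) = a * F v + F w) ->
  F (fun _ => 0) = 0.
Proof.
move=> hF; have := hF 1 (fun _ => 0) (fun _ => 0).
have -> : (fun _ : B => 1 * 0 + 0) = (fun _ => 0 : R).
  by apply: boolp.funext => j; rewrite mulr0 addr0.
by rewrite mul1r => h; lra.
Qed.

Lemma lin_seq (F : (B -> R) -> R) (I : Type) (s : seq I) (c : I -> R) (f : I -> B -> R) :
  (forall (a : R) (v w : B -> R), F (fun j => a * v j + w j) = a * F v + F w) ->
  F (fun j => \sum_(k <- s) c k * f k j) = \sum_(k <- s) c k * F (f k).
Proof.
move=> hF; elim: s => [|k s IH].
  have -> : (fun j => \sum_(k <- [::]) c k * f k j) = (fun _ => 0).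
    by apply: boolp.funext => j; rewrite big_nil.
  by rewrite big_nil lin0.
have -> : (fun j => \sum_(k0 <- k :: s) c k0 * f k0 j) =
  (fun j => c k * f k j + \sum_(k0 <- s) c k0 * f k0 j).
  by apply: boolp.funext => j; rewrite big_cons.
by rewrite big_cons hF IH.
Qed.

Lemma lin_expand (F : (B -> R) -> R) (psi : B -> R) :
  (forall (a : R) (v w : B -> R), F (fun j => a * v j + w j) = a * F v + F w) ->
  F psi = \sum_k psi k * F (delta k).
Proof.
move=> hF; rewrite -lin_seq //; congr F; apply: boolp.funext => j.
rewrite (bigD1 j) //= /delta eqxx mulr1 big1 ?addr0 // => k kj.
by rewrite eq_sym (negbTE kj) mulr0.
Qed.

Lemma sum_rank (G : 'I_#|B| -> R) : \sum_(p < #|B|) G p = \sum_(j : B) G (enum_rank j).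
Proof.
rewrite (reindex enum_rank) //; apply: onW_bij; exists enum_val.
  exact: enum_rankK.
exact: enum_valK.
Qed.

Lemma aform_expand1 (w : B -> R) (k : B) :
  aform w (delta k) = \sum_j w j * aform (delta j) (delta k).
Proof.
rewrite aform_sym (lin_expand w (aform_lin (delta k))).
by apply: eq_bigr => j _; rewrite aform_sym.
Qed.

Definition Amx : 'M[R]_#|B| :=
  \matrix_(p, q) aform (delta (enum_val p)) (delta (enum_val q)).

Lemma Amx_mul (v : 'rV[R]_#|B|) (k : B) :
  (v *m Amx) 0 (enum_rank k) = aform (fun j => v 0 (enum_rank j)) (delta k).
Proof.
rewrite mxE aform_expand1 sum_rank; apply: eq_bigr => j _.
by rewrite mxE !enum_rankK.
Qed.

Lemma aform_ge0 v : 0 <= aform v v.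
Proof.
rewrite /aform /L2vinner; apply: Rintegral_ge0 => x _.
by apply: sumr_ge0 => k _; rewrite -expr2 sqr_ge0.
Qed.

Lemma Amx_unit : Amx \in unitmx.
Proof.
rewrite -row_free_unit; apply: inj_row_free => v hv.
set f := fun j => v 0 (enum_rank j).
have h0 : aform f f = 0.
  rewrite (lin_expand f (aform_lin f)) big1 // => k _.
  by rewrite -Amx_mul hv mxE mulr0.
have := ginj (v := f); rewrite /L2vnorm -/(aform f f) h0 sqrtr0 => /(_ erefl) hf.
apply/rowP => p; rewrite mxE.
by have := congr1 (fun g => g (enum_val p)) hf; rewrite /f /= enum_valK.
Qed.

Lemma riesz (c : B -> R) : exists w, forall psi, aform w psi = \sum_k psi k * c k.
Proof.
pose cv : 'rV[R]_#|B| := \row_q c (enum_val q).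
pose wv := cv *m invmx Amx.
exists (fun j => wv 0 (enum_rank j)) => psi.
rewrite (lin_expand psi (aform_lin _)); apply: eq_bigr => k _; congr (_ * _).
by rewrite -Amx_mul /wv mulmxKV ?Amx_unit // mxE enum_rankK.
Qed.

Definition negv (v : B -> R) : B -> R := fun j => -1 * v j + (fun _ => 0) j.

Lemma aform_neg w : aform (negv w) (negv w) = aform w w.
Proof.
rewrite /negv aform_lin (lin0 (aform_lin _)) addr0 aform_sym aform_lin.
by rewrite (lin0 (aform_lin _)) addr0; lra.
Qed.

Lemma mform_neg u w : mform u (negv w) = - mform u w.
Proof. by rewrite /negv mform_lin (lin0 (mform_lin _)) addr0 mulN1r. Qed.

Lemma cs_unit w w' : aform w' w' = 1 -> (aform w w') ^+ 2 <= aform w w.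
Proof.
move=> h1; set t := aform w w'.
pose z := fun j => (- t) * w' j + w j.
have := aform_ge0 z.
have e1 : aform z w' = 0.
  by rewrite aform_sym /z aform_lin h1 aform_sym -/t mulr1 addNr.
have e2 : aform z w = aform w w - t ^+ 2.
  rewrite aform_sym /z aform_lin -/t; lra.
rewrite {2}/z aform_lin e1 e2; lra.
Qed.

Lemma dual_bound (e : B -> R) (w : B -> R) :
  (forall psi, aform w psi = mform e psi) ->
  (dualnorm mu Theta Om grad (PiD Om e)) ^+ 2 <= aform w w.
Proof.
move=> hw; rewrite /dualnorm.
set S := [set y : R | _].
have ub : ubound S (Num.sqrt (aform w w)).
  move=> y [w' [h1 ->]].
  have h1' : aform w' w' = 1.
    by rewrite -(sqr_sqrtr (aform_ge0 w')) /aform; rewrite /L2vnorm in h1; rewrite h1 expr1n.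
  have := cs_unit w h1'; rewrite hw -/(mform e w') => hc.
  apply: (le_trans (ler_norm _)); rewrite -(sqrtr_sqr (mform e w')).
  by rewrite ler_sqrt ?aform_ge0.
have [[y0 Sy0]|S0] := pselect (S !=set0); last first.
  have -> : S = set0 by apply/seteqP; split => y // Sy; apply: S0; exists y.
  by rewrite sup0 expr0n /= aform_ge0.
have hub : has_ubound S by exists (Num.sqrt (aform w w)).
have le1 := ge_sup (ex_intro _ y0 Sy0) ub.
have Sny : S (- y0).
  case: Sy0 => w' [h1 ->]; exists (negv w'); split.
    by rewrite -h1 /L2vnorm -/(aform _ _) -/(aform _ _) aform_neg.
  by rewrite -/(mform e (negv w')) mform_neg.
have ge1 := ub_le_sup hub Sy0.
have ge2 := ub_le_sup hub Sny.
have s0 : 0 <= sup S by lra.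
rewrite -(sqr_sqrtr (aform_ge0 w)).
by rewrite lerXn2r ?nnegrE ?sqrtr_ge0.
Qed.

Lemma aform_sub (v w phi : B -> R) :
  aform (fun j => v j - w j) phi = aform v phi - aform w phi.
Proof.
have -> : (fun j => v j - w j) = (fun j => 1 * v j + negv w j).
  by apply: boolp.funext => j; rewrite /negv mul1r mulN1r addr0.
rewrite aform_sym aform_lin /negv aform_lin (lin0 (aform_lin _)) addr0.
by rewrite !(aform_sym phi); ring.
Qed.

Lemma mform_sub (v w phi : B -> R) :
  mform (fun j => v j - w j) phi = mform v phi - mform w phi.
Proof.
have -> : (fun j => v j - w j) = (fun j => 1 * v j + negv w j).
  by apply: boolp.funext => j; rewrite /negv mul1r mulN1r addr0.
rewrite mform_sym mform_lin /negv mform_lin (lin0 (mform_lin _)) addr0.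
by rewrite !(mform_sym phi); ring.
Qed.

Lemma grad0 : grad (fun _ => 0) = (fun _ => 0).
Proof.
have := glin 1 (fun _ => 0) (fun _ => 0).
have -> : (fun _ : B => 1 * 0 + 0) = (fun _ => 0 : R).
  by apply: boolp.funext => j; rewrite mulr0 addr0.
move=> h; apply: boolp.funext => x.
have hx := congr1 (fun g => g x) h; rewrite /= scale1r in hx.
by have := subrr (grad (fun _ => 0) x); rewrite {1}hx addrK.
Qed.

Lemma gcomb (L : R) (a b : B -> R) :
  (fun x => L *: grad a x - grad b x) = grad (fun j => L * a j + negv b j).
Proof.
rewrite glin /negv glin grad0; apply: boolp.funext => x.
by rewrite addr0 scaleN1r.
Qed.

Lemma aform_comb (L : R) (a b phi : B -> R) :
  aform (fun j => L * a j + negv b j) phi = L * aform a phi - aform b phi.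
Proof.
rewrite aform_sym aform_lin /negv aform_lin (lin0 (aform_lin _)) addr0.
by rewrite !(aform_sym phi); ring.
Qed.

Lemma mform_ge0 v : 0 <= mform v v.
Proof.
by rewrite /mform /L2inner; apply: Rintegral_ge0 => x _; rewrite -expr2 sqr_ge0.
Qed.

Lemma intB_ (f g : T -> R) : mu.-integrable Theta (EFin \o f) ->
  mu.-integrable Theta (EFin \o g) ->
  mu.-integrable Theta (EFin \o (fun x => f x - g x)).
Proof.
move=> hf hg; apply: (eq_integrable mTh _ _ _ (integrableB mTh hf hg)).
by move=> x _ /=; rewrite EFinB.
Qed.

Lemma intD_ (f g : T -> R) : mu.-integrable Theta (EFin \o f) ->
  mu.-integrable Theta (EFin \o g) ->
  mu.-integrable Theta (EFin \o (fun x => f x + g x)).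
Proof.
move=> hf hg; apply: (eq_integrable mTh _ _ _ (integrableD mTh hf hg)).
by move=> x _ /=; rewrite EFinD.
Qed.

Lemma m_bound (a b dl : B -> R) (L : R) :
  (forall x, PiD Om a x * (L * PiD Om b x - PiD Om dl x) <=
             L / 2 * (PiD Om a x * PiD Om a x + PiD Om b x * PiD Om b x)) ->
  L * mform a b - mform a dl <= L / 2 * (mform a a + mform b b).
Proof.
move=> hp; rewrite /mform /L2inner.
have iab := L2_prod mTh (PiD_L2 a) (PiD_L2 b).
have iad := L2_prod mTh (PiD_L2 a) (PiD_L2 dl).
have iaa := L2_prod mTh (PiD_L2 a) (PiD_L2 a).
have ibb := L2_prod mTh (PiD_L2 b) (PiD_L2 b).
rewrite -RintegralZl // -RintegralB //; last exact: int_scale.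
rewrite -RintegralD // -RintegralZl //; last exact: intD_.
apply: le_Rintegral => //.
- by apply: intB_ => //; exact: int_scale.
- by apply: int_scale; exact: intD_.
- move=> x _; have := hp x; congr (_ <= _); ring.
Qed.


Lemma main_aux (zeta : R -> R) (Lzeta L dt : R) (r : T -> R)
  (un : B -> R) (U : nat -> B -> R) :
  {homo zeta : a b / a <= b} -> 0 <= Lzeta ->
  (forall a b, `|zeta a - zeta b| <= Lzeta * `|a - b|) ->
  0 < dt -> Lzeta / 2 <= L ->
  (forall phi : B -> R,
      L2inner mu Theta (PiD Om un) (PiD Om phi)
      + dt * L2vinner mu Theta (grad (compv zeta un)) (grad phi)
      = L2inner mu Theta r (PiD Om phi)) ->
  (forall (i : nat) (phi : B -> R), (1 <= i)%N ->
      L2inner mu Theta (PiD Om (U i)) (PiD Om phi)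
      + dt * L * L2vinner mu Theta (grad (U i)) (grad phi)
      = dt * L2vinner mu Theta
               (fun x => L *: grad (U i.-1) x - grad (compv zeta (U i.-1)) x)
               (grad phi)
        + L2inner mu Theta r (PiD Om phi)) ->
  let e := fun i : nat => (fun j => un j - U i j) in
  (forall i : nat, (1 <= i)%N ->
      2 * (dualnorm mu Theta Om grad (PiD Om (e i))) ^+ 2
      + dt * L * (L2norm mu Theta (PiD Om (e i))) ^+ 2
      <= dt * L * (L2norm mu Theta (PiD Om (e i.-1))) ^+ 2)
  /\
  (2%:E * \sum_(1 <= i <oo)
       ((dualnorm mu Theta Om grad (PiD Om (e i))) ^+ 2)%:E
   <= (dt * L * (L2norm mu Theta (PiD Om (e 0%N))) ^+ 2)%:E)%E.
Proof.
move=> zm Lz0 zl dt0 hL hun hU e.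
have L0 : 0 <= L by lra.
have Nsq : forall v, L2norm mu Theta (PiD Om v) ^+ 2 = mform v v.
  by move=> v; rewrite /L2norm sqr_sqrtr // mform_ge0.
have step : forall i, (1 <= i)%N ->
   2 * (dualnorm mu Theta Om grad (PiD Om (e i))) ^+ 2 + dt * L * mform (e i) (e i)
   <= dt * L * mform (e i.-1) (e i.-1).
  move=> i hi.
  pose dl := fun j => compv zeta un j - compv zeta (U i.-1) j.
  have herr : forall phi, mform (e i) phi + dt * L * aform (e i) phi =
      dt * L * aform (e i.-1) phi - dt * aform dl phi.
    move=> phi.
    have h1 : mform un phi + dt * aform (compv zeta un) phi =
      L2inner mu Theta r (PiD Om phi) := hun phi.
    have h2 : mform (U i) phi + dt * L * aform (U i) phi =
      dt * (L * aform (U i.-1) phi - aform (compv zeta (U i.-1)) phi) +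
      L2inner mu Theta r (PiD Om phi).
      have := hU i phi hi; rewrite (gcomb L (U i.-1) (compv zeta (U i.-1))) => h.
      rewrite -aform_comb; exact: h.
    rewrite /e /dl mform_sub !aform_sub.
    lra.
  have [w hw0] := riesz (fun k => mform (e i) (delta k)).
  have hw : forall psi, aform w psi = mform (e i) psi.
    by move=> psi; rewrite hw0 (lin_expand psi (mform_lin (e i))).
  have ew := herr w.
  rewrite (aform_sym (e i) w) (aform_sym (e i.-1) w) (aform_sym dl w) !hw in ew.
  have aww : aform w w = mform (e i) w := hw w.
  have db := dual_bound hw.
  have bnd : L * mform (e i) (e i.-1) - mform (e i) dl <=
      L / 2 * (mform (e i) (e i) + mform (e i.-1) (e i.-1)).
    apply: m_bound => x.
    have [[j hj]|nj] := pselect (exists j, Om j x).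
      rewrite !(PiD_in _ hj) /e /dl /compv.
      exact: (pw_ineq (un j - U i j) (un j) (U i.-1 j) zm Lz0 zl hL).
    have hout : forall j, ~ Om j x by move=> j hj; apply: nj; exists j.
    rewrite !(PiD_out _ hout); lra.
  have := ler_wpM2l (ltW dt0) bnd.
  lra.
split.
  by move=> i hi; rewrite !Nsq; exact: step i hi.
set D := fun i => (dualnorm mu Theta Om grad (PiD Om (e i))) ^+ 2.
have part : forall n, 2 * \sum_(1 <= i < n.+1) D i + dt * L * mform (e n) (e n)
    <= dt * L * mform (e 0%N) (e 0%N).
  elim=> [|n IH]; first by rewrite big_geq // mulr0 add0r.
  rewrite big_nat_recr //=; have := step n.+1 erefl; rewrite /D /=.
  have := mform_ge0 (e n); lra.
have c0 : 0 <= dt * L * mform (e 0%N) (e 0%N).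
  by apply: mulr_ge0; [apply: mulr_ge0; lra | exact: mform_ge0].
rewrite Nsq.
have hS : (\sum_(1 <= i <oo) (D i)%:E <= (dt * L * mform (e 0%N) (e 0%N) / 2)%:E)%E.
  apply: lime_le.
    by apply: is_cvg_nneseries => n _ _; rewrite lee_fin sqr_ge0.
  apply: nearW => n; rewrite sumEFin lee_fin.
  case: n => [|m]; first by rewrite big_geq //; lra.
  have := part m; have := mform_ge0 (e m).
  have : 0 <= dt * L by apply: mulr_ge0; lra.
  nra.
have h2 : (0 <= (2:R)%:E)%E by rewrite lee_fin.
apply: (le_trans (lee_wpmul2l h2 hS)).
by rewrite -EFinM lee_fin; lra.
Qed.

End Forms.

Theorem mainTheorem2
  (R : realType) (dsp : measure_display) (T : measurableType dsp)
  (mu : {measure set T -> \bar R}) (Theta : set T) (d : nat)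
  (B : finType) (Om : B -> set T) (grad : (B -> R) -> T -> 'rV[R]_d)
  (zeta : R -> R) (Lzeta L dt : R) (r : T -> R)
  (un : B -> R) (U : nat -> B -> R) :
  (* the domain: measurable, finite measure *)
  measurable Theta -> (mu Theta < +oo)%E ->
  (* piecewise constant reconstruction: disjoint measurable cells in Theta *)
  (forall j, measurable (Om j)) -> (forall j, Om j `<=` Theta) ->
  (forall j k, j != k -> Om j `&` Om k = set0) ->
  (* grad_D : X_D -> L^2(Theta)^d linear, and ||grad_D .|| is a norm *)
  (forall v, isL2v mu Theta (grad v)) ->
  (forall (a : R) (v w : B -> R),
      grad (fun j => a * v j + w j) = (fun x => a *: grad v x + grad w x)) ->
  (forall v, L2vnorm mu Theta (grad v) = 0 -> v = (fun _ => 0)) ->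
  (* zeta non-decreasing, Lipschitz with constant Lzeta, zeta(0) = 0 *)
  {homo zeta : a b / a <= b} -> zeta 0 = 0 -> 0 <= Lzeta ->
  (forall a b, `|zeta a - zeta b| <= Lzeta * `|a - b|) ->
  0 < dt -> isL2 mu Theta r -> Lzeta / 2 <= L ->
  (* u^n solves the nonlinear discrete equation *)
  (forall phi : B -> R,
      L2inner mu Theta (PiD Om un) (PiD Om phi)
      + dt * L2vinner mu Theta (grad (compv zeta un)) (grad phi)
      = L2inner mu Theta r (PiD Om phi)) ->
  (* the linearised iterates u^{n,i}, i >= 1 (u^{n,0} = U 0 arbitrary) *)
  (forall (i : nat) (phi : B -> R), (1 <= i)%N ->
      L2inner mu Theta (PiD Om (U i)) (PiD Om phi)
      + dt * L * L2vinner mu Theta (grad (U i)) (grad phi)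
      = dt * L2vinner mu Theta
               (fun x => L *: grad (U i.-1) x - grad (compv zeta (U i.-1)) x)
               (grad phi)
        + L2inner mu Theta r (PiD Om phi)) ->
  let e := fun i : nat => (fun j => un j - U i j) in
  (forall i : nat, (1 <= i)%N ->
      2 * (dualnorm mu Theta Om grad (PiD Om (e i))) ^+ 2
      + dt * L * (L2norm mu Theta (PiD Om (e i))) ^+ 2
      <= dt * L * (L2norm mu Theta (PiD Om (e i.-1))) ^+ 2)
  /\
  (2%:E * \sum_(1 <= i <oo)
       ((dualnorm mu Theta Om grad (PiD Om (e i))) ^+ 2)%:E
   <= (dt * L * (L2norm mu Theta (PiD Om (e 0%N))) ^+ 2)%:E)%E.
Proof.
Proof.
move=> mTh finTh mOm OmTh Omdisj gL2 glin ginj zm z0 Lz0 zl dt0 rL2 hL hun hU.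
exact: (main_aux mTh finTh mOm Omdisj gL2 glin ginj zm Lz0 zl dt0 hL hun hU).
Qed.
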